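(* Let $G$ be a finite, simple, connected graph of order $n\ge 4$, and let $u,w_1,w_2\in V(G)$ with $\deg(u)=n-3$ and $V(G)=N[u]\cup\{w_1,w_2\}$. Then $\{u\}$ is a power dominating set of $G$ if and only if $w_1$ and $w_2$ are not twins.
   Context: Two vertices $x,y$ are twins if $N(x)=N(y)$ or $N[x]=N[y]$. For $U\subseteq V(G)$, $cl(U)$ is obtained by coloring $U$ black and repeatedly applying: if a black vertex has exactly one white neighbor, that neighbor becomes black. $S$ is a power dominating set if $cl(N[S])=V(G)$. *)

(* Defs.v *)
From mathcomp Require Import all_boot.
Set Implicit Arguments. Unset Strict Implicit. Unset Printing Implicit Defensive.

Definition simple_graph (T : finType) (e : rel T) : Prop :=
  symmetric e /\ irreflexive e.

Definition connected_graph (T : finType) (e : rel T) : Prop :=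
  forall x y : T, connect e x y.

Definition N (T : finType) (e : rel T) (x : T) : {set T} := [set y | e x y].
Definition Nc (T : finType) (e : rel T) (x : T) : {set T} := x |: N e x.
Definition NS (T : finType) (e : rel T) (S : {set T}) : {set T} :=
  \bigcup_(x in S) Nc e x.

Definition deg (T : finType) (e : rel T) (x : T) : nat := #|N e x|.

Definition twins (T : finType) (e : rel T) (x y : T) : Prop :=
  N e x = N e y \/ Nc e x = Nc e y.

(* one round of the color-change rule (applied to all forcing vertices at once):
   a black vertex v with exactly one white neighbour x forces x. *)
Definition force_step (T : finType) (e : rel T) (B : {set T}) : {set T} :=
  B :|: [set x | [exists v in B, N e v :\: B == [set x]]].

(* closure: iterate the rule until stable; #|T| rounds suffice since every
   non-final round blackens at least one vertex *)
Definition cl (T : finType) (e : rel T) (U : {set T}) : {set T} :=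
  iter #|T| (force_step e) U.

Definition power_dominating (T : finType) (e : rel T) (S : {set T}) : Prop :=
  cl e (NS e S) = [set: T].

(* Main.v *)
Require Import Defs.
From mathcomp Require Import all_boot.
From mathcomp Require Import zify.

Lemma iter_mono (T : finType) (e : rel T) (B : {set T}) k m : k <= m ->
  iter k (force_step e) B \subset iter m (force_step e) B.
Proof.
move=> /subnKC <-; elim: (m - k) => [|j IH]; rewrite ?addn0 // addnS /=.
exact: subset_trans IH (subsetUl _ _).
Qed.

Lemma forceP (T : finType) (e : rel T) (B : {set T}) v x :
  v \in B -> N e v :\: B = [set x] -> x \in force_step e B.
Proof.
move=> vB H; rewrite /force_step inE; apply/orP; right; rewrite inE.
by apply/existsP; exists v; rewrite vB /= H eqxx.
Qed.

Lemma inN (T : finType) (e : rel T) x y : (y \in N e x) = e x y.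
Proof. by rewrite /N inE. Qed.

Lemma pd_of (T : finType) (e : rel T) u a b :
  irreflexive e ->
  (forall y, y \in Nc e u \/ y = a \/ y = b) ->
  a \notin Nc e u -> b \notin Nc e u -> a != b ->
  (exists v, [/\ e u v, e v a & ~~ e v b]) ->
  (exists y, e y b) -> 2 <= #|T| ->
  cl e (Nc e u) = [set: T].
Proof.
move=> irr cov aN bN ab [v [uv va vb]] [y yb] n2.
set B1 := force_step e (Nc e u).
have sub1 : Nc e u \subset B1 by apply: subsetUl.
have aB1 : a \in B1.
  apply: (@forceP _ _ _ v); first by rewrite /Nc /N !inE uv orbT.
  apply/setP => z; rewrite in_setD in_set1 inN.
  case: (cov z) => [zN|[->|->]].
  - rewrite zN /=; apply/esym/eqP => za; move: aN; by rewrite -za zN.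
  - by rewrite va eqxx aN.
  - by rewrite (negbTE vb) eq_sym (negbTE ab) andbF.
set B2 := force_step e B1.
have sub2 : B1 \subset B2 by apply: subsetUl.
have bB2 : b \in B2.
  case bB1: (b \in B1); first by rewrite (subsetP sub2).
  have yB1 : y \in B1.
    case: (cov y) => [yN|[->|yb']]; first by rewrite (subsetP sub1).
      by [].
    by move: yb; rewrite yb' irr.
  rewrite /B2; apply: (@forceP _ _ B1 y b yB1); apply/setP => z; rewrite in_setD in_set1 inN.
  case: (cov z) => [zN|[->|->]].
  - rewrite (subsetP sub1 _ zN) /=; apply/esym/eqP => zb.
    by move: bN; rewrite -zb zN.
  - by rewrite aB1 /= (negbTE ab).
  - by rewrite yb bB1 eqxx.
have H2 : iter 2 (force_step e) (Nc e u) = [set: T].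
  apply/eqP; rewrite eqEsubset subsetT /=; apply/subsetP => z _.
  rewrite /= -/B1 -/B2.
  case: (cov z) => [zN|[->|->]].
  - by rewrite (subsetP sub2) // (subsetP sub1).
  - by rewrite (subsetP sub2).
  - by [].
apply/eqP; rewrite eqEsubset subsetT /= -H2 /cl; exact: iter_mono.
Qed.

Arguments pd_of {T e u a b}.

Theorem mainTheorem6 (T : finType) (e : rel T) (u w1 w2 : T) :
  simple_graph e -> connected_graph e -> 4 <= #|T| ->
  deg e u = #|T| - 3 ->
  [set: T] = Nc e u :|: [set w1; w2] ->
  (power_dominating e [set u] <-> ~ twins e w1 w2).
Proof.
move=> [sym irr] conn n4 hdeg hV.
have hNc : #|Nc e u| = #|T| - 2.
  rewrite /Nc cardsU1 -/(deg e u) hdeg /N inE irr /=; move: n4; set k := #|T|; lia.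
have hI : #|Nc e u :&: [set w1; w2]| = 0 /\ w1 != w2.
  have := cardsUI (Nc e u) [set w1; w2]; rewrite -hV cardsT hNc cards2.
  move: n4; set k := #|T|; case: (w1 != w2) => /=; lia.
case: hI => /eqP; rewrite cards_eq0 => /eqP hI w12.
have w1N : w1 \notin Nc e u.
  by apply/negP => h; have := in_set0 w1; rewrite -hI in_setI h in_set2 eqxx.
have w2N : w2 \notin Nc e u.
  by apply/negP => h; have := in_set0 w2; rewrite -hI in_setI h in_set2 eqxx orbT.
have cov : forall y, y \in Nc e u \/ y = w1 \/ y = w2.
  move=> y; have : y \in [set: T] by [].
  rewrite hV in_setU in_set2; case/orP => [h|/orP[/eqP->|/eqP->]]; auto.
have NS1 : NS e [set u] = Nc e u by rewrite /NS big_set1.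
rewrite /power_dominating NS1.
have noPD : (forall v, e u v -> e v w1 = e v w2) -> cl e (Nc e u) <> [set: T].
  move=> hv; have fix0 : force_step e (Nc e u) = Nc e u.
    apply/eqP; rewrite eqEsubset subsetUl andbT; apply/subsetP => x.
    rewrite /force_step inE => /orP[//|]; rewrite inE.
    case/existsP => v /andP[vB /eqP H].
    have : x \in N e v :\: Nc e u by rewrite H set11.
    rewrite !inE => /andP[xN vx].
    have vu : e u v.
      move: vB; rewrite /Nc /N !inE => /orP[/eqP vu|//].
      by move: xN; rewrite -vu vx orbT.
    have xw : (x == w1) || (x == w2).
      case: (cov x) => [h|[->|->]]; last by rewrite eqxx orbT.
        by move: xN; rewrite /Nc /N !inE in h *; rewrite h.
      by rewrite eqxx.
    have vw12 : e v w1 && e v w2.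
      by case/orP: xw => /eqP xw; subst x; [rewrite -(hv _ vu) vx | rewrite (hv _ vu) vx].
    case/andP: vw12 => v1 v2.
    have h1 : w1 \in N e v :\: Nc e u by rewrite !inE v1 andbT; move: w1N; rewrite /Nc /N !inE.
    have h2 : w2 \in N e v :\: Nc e u by rewrite !inE v2 andbT; move: w2N; rewrite /Nc /N !inE.
    rewrite H !inE in h1 h2.
    by move: w12; rewrite (eqP h1) (eqP h2) eqxx.
  have : cl e (Nc e u) = Nc e u.
    rewrite /cl; elim: #|T| => [|k IH] //=; by rewrite IH fix0.
  move=> -> hT; move: w1N; by rewrite hT inE.
split.
- move=> PD tw; apply: (noPD _ PD) => v uv.
  have vw1 : v != w1 by apply/eqP => vw; move: w1N; rewrite -vw /Nc /N !inE uv orbT.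
  have vw2 : v != w2 by apply/eqP => vw; move: w2N; rewrite -vw /Nc /N !inE uv orbT.
  case: tw => [h|h].
  + rewrite sym [e v w2]sym; have := f_equal (fun S : {set T} => v \in S) h.
    by rewrite /N !inE.
  + rewrite sym [e v w2]sym; have := f_equal (fun S : {set T} => v \in S) h.
    by rewrite /Nc /N !inE (negbTE vw1) (negbTE vw2).
- move=> ntw.
  have n2 : 2 <= #|T| by lia.
  have nbr : forall b, b \notin Nc e u -> exists y, e y b.
    move=> b bN; have := conn b u; case/connectP => -[|y p] /= pth hl.
      by move: bN; rewrite -hl /Nc !inE eqxx.
    by case/andP: pth => by_ _; exists y; rewrite sym.
  case: (boolP [exists v, e u v && (e v w1 != e v w2)]).
  + case/existsP => v /andP[uv hv].
    case v1: (e v w1) hv => /= hv.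
    * apply: (pd_of irr cov w1N w2N w12 _ (nbr _ w2N) n2).
      by exists v; split => //; rewrite -(negbNE hv) ; move: hv; case: (e v w2).
    * apply: (pd_of (a := w2) (b := w1) irr _ w2N w1N _ _ (nbr _ w1N) n2).
      - by move=> y; case: (cov y) => [h|[h|h]]; auto.
      - by rewrite eq_sym.
      - by exists v; split => //; rewrite ?v1 //; move: hv; case: (e v w2).
  + move=> hne; exfalso; apply: ntw.
    have hv : forall v, e u v -> e v w1 = e v w2.
      move=> v uv; apply/eqP; apply/negPn/negP => hneq; move/negP: hne; apply.
      by apply/existsP; exists v; rewrite uv.
    have uw1 : ~~ e w1 u by rewrite sym; move: w1N; rewrite /Nc /N !inE negb_or => /andP[].
    have uw2 : ~~ e w2 u by rewrite sym; move: w2N; rewrite /Nc /N !inE negb_or => /andP[].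
    have u1 : u != w1 by apply/eqP => h; move: w1N; rewrite -h /Nc !inE eqxx.
    have u2 : u != w2 by apply/eqP => h; move: w2N; rewrite -h /Nc !inE eqxx.
    case w12e: (e w1 w2).
    * right; apply/setP => y; rewrite /Nc /N !inE.
      case: (cov y) => [h|[->|->]].
      - move: h; rewrite /Nc /N !inE => /orP[/eqP->|uy].
          by rewrite (negbTE uw1) (negbTE uw2) (negbTE u1) (negbTE u2).
        have y1 : y != w1 by apply/eqP => h; move: w1N; rewrite -h /Nc /N !inE uy orbT.
        have y2 : y != w2 by apply/eqP => h; move: w2N; rewrite -h /Nc /N !inE uy orbT.
        by rewrite (negbTE y1) (negbTE y2) /= sym (hv _ uy) sym.
      - by rewrite eqxx sym w12e orbT.
      - by rewrite eqxx w12e orbT.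
    * left; apply/setP => y; rewrite /N !inE.
      case: (cov y) => [h|[->|->]].
      - move: h; rewrite /Nc /N !inE => /orP[/eqP->|uy].
          by rewrite (negbTE uw1) (negbTE uw2).
        by rewrite sym (hv _ uy) sym.
      - by rewrite irr sym w12e.
      - by rewrite irr w12e.
Qed.
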